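(* Let $0<s<\tfrac12$ and $\gamma_1(s)=\frac{1}{2}\left(\frac{2^{1-2s}-1}{1-2^{-2s}}\right)$. For every $h\in\mathcal{H}$: (a) $\operatorname{Var}|h|^2=\tfrac{1}{12}|I(h)|^2$; (b) $\mathcal{Q}^\delta_s(h)=\gamma_1(s)\,|I(h)|^{2s}$.
   Context: Let $\mathbb{R}^+=(0,\infty)$. Dyadic intervals. $\mathcal{D}$ is the family of dyadic intervals $I^j_k=(k2^{-j},(k+1)2^{-j}]$ with $j\in\mathbb{Z}$ and $k$ a nonnegative integer. Dyadic distance. $\delta(x,y)=\inf\{|I|:I\in\mathcal{D},\ x,y\in I\}$ for $x,y\in\mathbb{R}^+$. Haar system. $\mathcal{H}$ consists of the functions $h_I(x)=2^{j/2}h(2^jx-k)$ for $I=I^j_k\in\mathcal{D}$, where $h=\chi_{(0,1/2]}-\chi_{(1/2,1]}$. For $h=h_I$ write $I(h)=I$. Variance. For $f\ge0$ on $\mathbb{R}$, $\operatorname{Var}f=\inf_{a\in\mathbb{R}}\int_{\mathbb{R}}(x-a)^2f(x)\,dx$. Here $|h|^2$ is extended by zero outside $\mathbb{R}^+$. Position form. $\mathcal{Q}^\delta_s(\varphi)=\iint_{(\mathbb{R}^+)^2}\delta(x,y)^{2s}\varphi(x)\overline{\varphi(y)}\,\frac{dx\,dy}{\delta(x,y)}$. *)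

(* Defs.v *)
From HB Require Import structures.
From mathcomp Require Import all_boot all_order all_algebra.
From mathcomp Require Import all_classical all_reals all_analysis.
Set Implicit Arguments. Unset Strict Implicit. Unset Printing Implicit Defensive.
Import Order.TTheory GRing.Theory Num.Theory.
Import numFieldNormedType.Exports.
Local Open Scope classical_set_scope.
Local Open Scope ring_scope.

Definition dyadic_itv {R : realType} (j : int) (k : nat) : set R :=
  [set x : R | k%:R * (2:R) ^ (- j) < x /\ x <= k.+1%:R * (2:R) ^ (- j)].

Definition dyadic_len {R : realType} (j : int) : R := (2:R) ^ (- j).

Definition ddist {R : realType} (x y : R) : R :=
  inf [set dyadic_len j | j in
        [set j : int | exists k : nat, dyadic_itv j k x /\ dyadic_itv j k y]].

Definition haar0 {R : realType} (t : R) : R :=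
  if (0 < t) && (t <= 2^-1) then 1
  else if (2^-1 < t) && (t <= 1) then -1 else 0.

Definition haar {R : realType} (j : int) (k : nat) (x : R) : R :=
  Num.sqrt ((2:R) ^ j) * haar0 ((2:R) ^ j * x - k%:R).

Definition Var_dens {R : realType} (f : R -> R) : \bar R :=
  ereal_inf (range (fun a : R =>
    (\int[@lebesgue_measure R]_x (((x - a) ^+ 2 * f x)%R)%:E)%E)).

Definition Qdelta {R : realType} (s : R) (phi : R -> R) : \bar R :=
  (\int[(@lebesgue_measure R) \x (@lebesgue_measure R)]_(z in
      [set z : R * R | (0 < z.1)%R /\ (0 < z.2)%R])
     ((ddist z.1 z.2 `^ (2 * s) * phi z.1 * phi z.2 / ddist z.1 z.2)%R)%:E)%E.

Definition gamma1 {R : realType} (s : R) : R :=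
  2^-1 * ((2 `^ (1 - 2 * s) - 1) / (1 - 2 `^ (- (2 * s)))).

(* Main.v *)
From Pilot Require Import Defs.
From HB Require Import structures.
From mathcomp Require Import all_boot all_order all_algebra.
From mathcomp Require Import all_classical all_reals all_analysis.
From mathcomp Require Import measurable_realfun.
From mathcomp Require Import zify ring lra.
Import Order.TTheory GRing.Theory Num.Theory.
Import numFieldNormedType.Exports.
Local Open Scope classical_set_scope.
Local Open Scope ring_scope.
Set Implicit Arguments. Unset Strict Implicit.
Local Notation dyi := Pilot.Defs.dyadic_itv.
Section Dy.
Variable R : realType.
Implicit Types (x y : R) (n j : int) (k q : nat).

Lemma two_pos n : 0 < (2:R) ^ n.
Proof. by apply: exprz_gt0. Qed.

Lemma dyE n k x : dyi n k x <-> (k%:R < 2 ^ n * x /\ 2 ^ n * x <= k.+1%:R).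
Proof.
rewrite /dyi /= -!invr_expz.
have h := two_pos n.
rewrite ltr_pdivrMr // ler_pdivlMr //.
by rewrite ![x * _]mulrC.
Qed.

Lemma dy_pos n k x : dyi n k x -> 0 < x.
Proof.
move=> /dyE [h _]; have h2 := two_pos n.
have : 0 < 2 ^ n * x by apply: le_lt_trans h.
by rewrite pmulr_rgt0.
Qed.

Lemma dy_uniq n a b x : dyi n a x -> dyi n b x -> a = b.
Proof.
move=> /dyE [h1 h2] /dyE [h3 h4].
apply/eqP; rewrite eqn_leq; apply/andP; split.
- by rewrite -ltnS -(ltr_nat R); exact: lt_le_trans h1 h4.
- by rewrite -ltnS -(ltr_nat R); exact: lt_le_trans h3 h2.
Qed.

Lemma exprzS1 n : (2:R) ^ (n + 1) = 2 * 2 ^ n.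
Proof. by rewrite expfzDr // expr1z mulrC. Qed.

Lemma dy_up n k x : dyi (n + 1) k x -> dyi n (k %/ 2) x.
Proof.
rewrite !dyE exprzS1 -mulrA => -[h1 h2].
set t := 2 ^ n * x in h1 h2 *.
have ek : k = ((k %/ 2) * 2 + k %% 2)%N by rewrite -divn_eq.
have hm : (k %% 2 < 2)%N by rewrite ltn_mod.
set q := (k %/ 2)%N in ek *; set r := (k %% 2)%N in ek hm.
rewrite ek natrD natrM in h1.
rewrite ek -addnS natrD natrM in h2.
have hr0 : (0:R) <= r%:R by [].
have hr1 : (r.+1%:R : R) <= 2 by rewrite ler_nat.
split; [lra|].
rewrite -addn1 natrD; lra.
Qed.

Lemma dy_split n q x : dyi n q x ->
  dyi (n + 1) q.*2 x \/ dyi (n + 1) q.*2.+1 x.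
Proof.
rewrite !dyE exprzS1 -mulrA => -[h1 h2].
set t := 2 ^ n * x in h1 h2 *.
have e1 : (q.*2%:R : R) = 2 * q%:R by rewrite -muln2 natrM mulrC.
have e2 : (q.*2.+1%:R : R) = 2 * q%:R + 1 by rewrite -addn1 natrD e1.
have e3 : (q.*2.+2%:R : R) = 2 * q%:R + 2 by rewrite -addn2 natrD e1.
have e4 : (q.+1%:R : R) = q%:R + 1 by rewrite -addn1 natrD.
rewrite e1 e2 e3; rewrite e4 in h2.
case: (lerP (2 * t) (2 * q%:R + 1)) => h; [left|right]; lra.
Qed.


Lemma addz1 n (m : nat) : n + (m.+1)%:Z = (n + m%:Z) + 1.
Proof. by rewrite -addn1 PoszD addrA. Qed.

Lemma dy_upm n (m : nat) k x : dyi (n + m%:Z) k x -> dyi n (k %/ 2 ^ m)%N x.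
Proof.
elim: m k => [|m IH] k; first by rewrite addr0 expn0 divn1.
rewrite addz1 => /dy_up /IH.
by rewrite -divnMA -expnS.
Qed.

Definition common n x y := exists k, dyi n k x /\ dyi n k y.

Lemma common_down n (m : nat) x y : common (n + m%:Z) x y -> common n x y.
Proof. by move=> [q [hx hy]]; exists (q %/ 2 ^ m)%N; split; apply: dy_upm. Qed.

Lemma le2z (a b : int) : a <= b -> (2:R) ^ a <= 2 ^ b.
Proof.
move=> hab.
have [d ->] : exists d : nat, b = a + d%:Z.
  exists (absz (b - a)%R); lia.
rewrite expfzDr // -[X in X <= _]mulr1 ler_pM2l ?two_pos //.
by apply: exprn_ege1; rewrite ler1n.
Qed.

Lemma common_close n x y : common n x y -> `|x - y| < 2 ^ (- n).
Proof.
move=> [q [/dyE [h1 h2] /dyE [h3 h4]]].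
have hp := two_pos n.
have : `|2 ^ n * x - 2 ^ n * y| < 1.
  have e : (q.+1%:R:R) = q%:R + 1 by rewrite -addn1 natrD.
  rewrite e in h2 h4; rewrite ltr_norml; apply/andP; split; lra.
rewrite -mulrBr normrM gtr0_norm // -ltr_pdivlMl // => h.

by rewrite -invr_expz; rewrite mulr1 in h.
Qed.

Lemma inf_min (S : set R) z0 : S z0 -> lbound S z0 -> inf S = z0.
Proof.
move=> Sz lb; apply/le_anti/andP; split.
  by apply: (ge_inf (ex_intro _ z0 lb)).
by apply: lb_le_inf => //; exists z0.
Qed.

Lemma ddist_eq n x y : common n x y -> ~ common (n + 1) x y ->
  ddist x y = dyadic_len n.
Proof.
move=> hc hnc; rewrite /ddist; apply: inf_min; first by exists n.
move=> z [j' hj' <-]; rewrite /dyadic_len; apply: le2z.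
rewrite lerN2; rewrite leNgt; apply/negP => hlt.
apply: hnc.
have [d ed] : exists d : nat, j' = n + 1 + d%:Z.
  exists (absz (j' - (n + 1))%R); lia.
by apply: (@common_down _ d); rewrite -ed.
Qed.

Lemma small_pow (c e : R) : 0 < e -> exists m : nat, c / 2 ^+ m < e.
Proof.
move=> he.
case: (lerP c 0) => hc.
  by exists 0%N; rewrite expr0 divr1; apply: le_lt_trans hc he.
have hce : 0 <= c / e by apply: divr_ge0; [apply: ltW|apply: ltW].
have := archi_boundP hce; set N := Num.Def.archi_bound _ => hN.
exists N.
have h2 : (N%:R : R) <= 2 ^+ N.
  have := ltn_expl N (isT : (1 < 2)%N) => /ltnW.
  by rewrite -(ler_nat R) natrX.
have h2p : (0:R) < 2 ^+ N by apply: exprn_gt0.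
rewrite ltr_pdivrMr // mulrC -ltr_pdivrMr //.
by apply: lt_le_trans hN h2.
Qed.

Lemma all_levels n k x : dyi n k x -> forall m : nat, exists q, dyi (n + m%:Z) q x.
Proof.
move=> hx; elim=> [|m [q hq]]; first by exists k; rewrite addr0.
rewrite addz1; case: (dy_split hq) => h; eexists; exact: h.
Qed.

Lemma ddist_diag n k x : dyi n k x -> ddist x x = 0.
Proof.
move=> hx; rewrite /ddist.
set S := [set _ | _ in _].
have Sne : S !=set0.
  by exists (dyadic_len n); exists n => //; exists k.
have lb0 : lbound S 0.
  by move=> z [j' _ <-]; apply/ltW/two_pos.
have h0 : 0 <= inf S by apply: lb_le_inf.
apply/le_anti/andP; split => //.
rewrite leNgt; apply/negP => hpos.
have [m hm] := small_pow (2 ^ (- n)) hpos.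
have [q hq] := all_levels hx m.
have : inf S <= dyadic_len (n + m%:Z).
  apply: (ge_inf (ex_intro _ 0 lb0)); exists (n + m%:Z) => //; exists q; split; exact: hq.
rewrite /dyadic_len opprD expfzDr // -[2 ^ (- m%:Z)]invr_expz.
move=> h; have := lt_le_trans hm h; by rewrite lt_irreflexive.
Qed.


Lemma nat2 q : (q.*2%:R : R) = 2 * q%:R.
Proof. by rewrite -muln2 natrM mulrC. Qed.
Lemma natS q : (q.+1%:R : R) = q%:R + 1.
Proof. by rewrite -addn1 natrD. Qed.

Lemma haar_left j k x : dyi (j + 1) k.*2 x -> haar j k x = Num.sqrt (2 ^ j).
Proof.
rewrite dyE exprzS1 -mulrA (natS k.*2) nat2 => -[h1 h2].
rewrite /haar /haar0.
have -> : (0 < 2 ^ j * x - k%:R) && (2 ^ j * x - k%:R <= 2^-1).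
  by apply/andP; split; lra.
by rewrite mulr1.
Qed.

Lemma haar_right j k x : dyi (j + 1) k.*2.+1 x -> haar j k x = - Num.sqrt (2 ^ j).
Proof.
rewrite dyE exprzS1 -mulrA (natS k.*2.+1) (natS k.*2) nat2 => -[h1 h2].
rewrite /haar /haar0.
have -> : (0 < 2 ^ j * x - k%:R) && (2 ^ j * x - k%:R <= 2^-1) = false.
  by apply/negbTE/negP => /andP [a b]; lra.
have -> : (2^-1 < 2 ^ j * x - k%:R) && (2 ^ j * x - k%:R <= 1).
  by apply/andP; split; lra.
by rewrite mulrN1.
Qed.

Lemma haar_out j k x : ~ dyi j k x -> haar j k x = 0.
Proof.
move=> hn; rewrite /haar /haar0.
have -> : (0 < 2 ^ j * x - k%:R) && (2 ^ j * x - k%:R <= 2^-1) = false.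
  apply/negbTE/negP => /andP [a b]; apply: hn; apply/dyE; rewrite (natS k); split; lra.
have -> : (2^-1 < 2 ^ j * x - k%:R) && (2 ^ j * x - k%:R <= 1) = false.
  apply/negbTE/negP => /andP [a b]; apply: hn; apply/dyE; rewrite (natS k); split; lra.
by rewrite mulr0.
Qed.

Lemma haar_in j k x : dyi j k x -> haar j k x ^+ 2 = 2 ^ j.
Proof.
move=> hx; have [h|h] := dy_split hx.
  by rewrite (haar_left h) sqr_sqrtr // ltW // two_pos.
by rewrite (haar_right h) sqrrN sqr_sqrtr // ltW // two_pos.
Qed.

End Dy.

Section Rect.
Variable R : realType.
Variables (j : int) (k : nat).
Implicit Types (x y : R) (m r p q : nat).

Definition lev m : int := j + m%:Z.
Definition partner p : nat := if odd p then p.-1 else p.+1.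
Definition Rect m p : set (R * R) :=
  dyi (lev m.+1) p `*` dyi (lev m.+1) (partner p).
Definition base m : nat := (k * 2 ^ m.+1)%N.
Definition G m : set (R * R) := \big[setU/set0]_(r < 2 ^ m.+1) Rect m (base m + r).

Lemma partner_half p : (partner p %/ 2)%N = (p %/ 2)%N.
Proof. by rewrite /partner; case: ifP => h; lia. Qed.

Lemma partner_neq p : partner p <> p.
Proof. by rewrite /partner; case: ifP => h; lia. Qed.

Lemma levS m : lev m.+1 = lev m + 1.
Proof. by rewrite /lev addz1. Qed.

Lemma Rect_common m p z : Rect m p z ->
  dyi (lev m) (p %/ 2)%N z.1 /\ dyi (lev m) (p %/ 2)%N z.2.
Proof.
move=> [hx hy]; rewrite levS in hx hy.
split; first exact: dy_up hx.
by rewrite -partner_half; apply: dy_up hy.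
Qed.

Lemma Rect_ncommon m p z : Rect m p z -> ~ common (lev m + 1) z.1 z.2.
Proof.
move=> [hx hy] [q [hqx hqy]]; rewrite levS in hx hy.
have e1 := dy_uniq hx hqx; have e2 := dy_uniq hy hqy.
by apply: (@partner_neq p); rewrite e2 e1.
Qed.

Lemma Rect_ddist m p z : Rect m p z -> ddist z.1 z.2 = dyadic_len (lev m).
Proof.
move=> hz; apply: ddist_eq; last exact: Rect_ncommon hz.
by have [? ?] := Rect_common hz; exists (p %/ 2)%N.
Qed.

Lemma Rect_disj m p p' z : Rect m p z -> Rect m p' z -> p = p'.
Proof. by move=> [hx _] [hx' _]; apply: dy_uniq hx hx'. Qed.

Lemma Rect_level m m' p p' z : Rect m p z -> Rect m' p' z -> m = m'.
Proof.
move=> h h'.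
wlog lt : m m' p p' h h' / (m < m')%N.
  move=> W; case: (ltngtP m m') => c //; first exact: W h h' c.
  by apply/esym; apply: W h' h c.
exfalso; apply: (Rect_ncommon h).
have [hx hy] := Rect_common h'.
have e : lev m' = (lev m + 1) + (m' - m.+1)%N%:Z.
  by rewrite /lev; lia.
by apply: (common_down (m := (m' - m.+1)%N)); rewrite -e; exists (p' %/ 2)%N.
Qed.

End Rect.

Section GG.
Variable R : realType.
Variables (j : int) (k : nat) (s : R).
Local Notation mu2 := ((@lebesgue_measure R) \x (@lebesgue_measure R))%E.
Local Notation Rect := (@Rect R j).
Local Notation base := (base k).
Local Notation G := (@G R j k).
Implicit Types (x y : R) (m r p q : nat).

Lemma dyi_itv (n : int) (q : nat) :
  dyi n q = `]q%:R * (2:R) ^ (- n), q.+1%:R * 2 ^ (- n)]%classic.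
Proof.
rewrite set_itvoc; apply/seteqP; split => x /=; first by move=> [a b]; apply/andP.
by move=> /andP.
Qed.

Lemma dyi_meas (n : int) (q : nat) : measurable (dyi n q : set R).
Proof. by rewrite dyi_itv; exact: measurable_itv. Qed.

Lemma dyi_measure (n : int) (q : nat) :
  lebesgue_measure (dyi n q : set R) = (dyadic_len n)%:E.
Proof.
rewrite dyi_itv lebesgue_measure_itv /= lte_fin.
have h := two_pos R (- n).
rewrite ltr_pM2r // ltr_nat ltnSn -EFinB natS.
by congr (_%:E); rewrite /dyadic_len; ring.
Qed.

Lemma G_mem m z : G m z <-> exists2 r, (r < 2 ^ m.+1)%N & Rect m (base m + r) z.
Proof.
rewrite /G -(bigcup_mkord _ (fun r => Rect m (base m + r))).
split => [[r hr hz]|[r hr hz]]; by exists r.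
Qed.

Lemma Rect_base m r z : (r < 2 ^ m.+1)%N -> Rect m (base m + r) z ->
  dyi j k z.1 /\ dyi j k z.2.
Proof.
move=> hr hz; have [hx hy] := Rect_common hz.
have e : (((base m + r) %/ 2) %/ 2 ^ m)%N = k.
  rewrite -divnMA -expnS /base divnMDl ?expn_gt0 //.
  by rewrite divn_small // addn0.
by split; rewrite -e; apply: dy_upm.
Qed.

Lemma same_half p x y : dyi (j + 1) p x -> dyi (j + 1) p y -> dyi j k x ->
  haar j k x = haar j k y.
Proof.
move=> hx hy hk.
have e : (p %/ 2)%N = k by apply: dy_uniq (dy_up hx) hk.
have [ep|ep] : p = k.*2 \/ p = k.*2.+1 by lia.
  by rewrite ep in hx hy; rewrite (haar_left hx) (haar_left hy).
by rewrite ep in hx hy; rewrite (haar_right hx) (haar_right hy).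
Qed.

Lemma Rect_haar m r z : (r < 2 ^ m.+1)%N -> Rect m (base m + r) z ->
  haar j k z.1 * haar j k z.2 = (if m == 0%N then -1 else 1) * 2 ^ j.
Proof.
move=> hr hz; have [hkx hky] := Rect_base hr hz.
case: m hr hz => [|m] hr hz /=.
  move: hz => [hx hy]; rewrite /lev addz1 addr0 in hx hy.
  rewrite /base expn1 in hx hy hr.
  have [e|e] : (k * 2 + r = k.*2)%N \/ (k * 2 + r = k.*2.+1)%N by lia.
    rewrite e in hx hy; rewrite /partner /= odd_double /= in hy.
    rewrite (haar_left hx) (haar_right hy) mulrN -expr2 sqr_sqrtr ?mulN1r //.
    exact/ltW/two_pos.
  rewrite e in hx hy; rewrite /partner /= odd_double /= in hy.
  rewrite (haar_right hx) (haar_left hy) mulrC mulrN -expr2 sqr_sqrtr ?mulN1r //.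
  exact/ltW/two_pos.
have [hx hy] := Rect_common hz.
have e : lev j m.+1 = (j + 1) + m%:Z by rewrite /lev; lia.
rewrite e in hx hy.
rewrite (same_half (dy_upm hx) (dy_upm hy) hkx) -expr2 haar_in // mul1r //.
Qed.


Definition Fq (z : R * R) : R :=
  ddist z.1 z.2 `^ (2 * s) * haar j k z.1 * haar j k z.2 / ddist z.1 z.2.

Definition vq m : R := dyadic_len (lev j m) `^ (2 * s) *
  ((if m == 0%N then -1 else 1) * 2 ^ j) / dyadic_len (lev j m).

Lemma G_value m z : G m z -> Fq z = vq m.
Proof.
move=> /G_mem [r hr hz]; rewrite /Fq /vq (Rect_ddist hz) -(Rect_haar hr hz) mulrA.
done.
Qed.

Lemma G_pos m z : G m z -> 0 < z.1 /\ 0 < z.2.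
Proof. by move=> /G_mem [r hr [hx hy]]; split; [apply: dy_pos hx|apply: dy_pos hy]. Qed.

Lemma Rect_meas m p : measurable (Rect m p).
Proof. by apply: measurableX; apply: dyi_meas. Qed.

Lemma G_meas m : measurable (G m).
Proof. by apply: bigsetU_measurable => r _; apply: Rect_meas. Qed.

Lemma G_triv : trivIset setT G.
Proof.
move=> a b _ _ [z [/G_mem [r hr hz] /G_mem [r' hr' hz']]].
exact: Rect_level hz hz'.
Qed.

Lemma Rect_measure m p :
  mu2 (Rect m p) = (dyadic_len (lev j m.+1) * dyadic_len (lev j m.+1))%:E.
Proof.
rewrite product_measure1E; [|apply: dyi_meas|apply: dyi_meas].
rewrite EFinM; congr (_ * _)%E; apply: dyi_measure.
Qed.

Lemma G_measure m :
  mu2 (G m) = ((dyadic_len (lev j m.+1) * dyadic_len (lev j m.+1)) *+ 2 ^ m.+1)%:E.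
Proof.
have h := measure_semi_additive (s := mu2) (fun r => Rect m (base m + r)) (2 ^ m.+1)%N.
rewrite /G h.
- rewrite (eq_bigr (fun _ => (dyadic_len (lev j m.+1) * dyadic_len (lev j m.+1))%:E)); last first.
    by move=> r _; apply: Rect_measure.
  by rewrite sumEFin sumr_const card_ord.
- by move=> r; apply: Rect_meas.
- move=> a b _ _ [z [ha hb]]; have := Rect_disj ha hb; lia.
- by apply: bigsetU_measurable => r _; apply: Rect_meas.
Qed.


Lemma G_intro m q a x y : (q %/ 2 ^ m)%N = k -> (a = q.*2 \/ a = q.*2.+1) ->
  dyi (lev j m + 1) a x -> dyi (lev j m + 1) (partner a) y -> G m (x, y).
Proof.
move=> ek ea hx hy; apply/G_mem.
have e1 := divn_eq q (2 ^ m); rewrite ek in e1.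
have e2 : (q %% 2 ^ m < 2 ^ m)%N by rewrite ltn_mod expn_gt0.
have e3 : base m = (k * 2 ^ m * 2)%N.
  by change (k * 2 ^ m.+1 = k * 2 ^ m * 2)%N; rewrite expnS; nia.
have e4 : (2 ^ m.+1 = 2 ^ m * 2)%N by rewrite expnS mulnC.
move: e1 e2 e3 e4; set P := (2 ^ m)%N; set KP := (k * P)%N => e1 e2 e3 e4.
exists (a - base m)%N; first by rewrite e4; lia.
have -> : (base m + (a - base m))%N = a by lia.
by split; rewrite levS.
Qed.

Lemma Fq_out z : 0 < z.1 -> 0 < z.2 -> ~ (exists m, G m z) -> Fq z = 0.
Proof.
case: z => x y /= px py hG.
have [hkx|hkx] := pselect (dyi j k x); last first.
  by rewrite /Fq /= (haar_out hkx) !mulr0 !mul0r.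
have [hky|hky] := pselect (dyi j k y); last first.
  by rewrite /Fq /= (haar_out hky) !mulr0 !mul0r.
have [exy|nxy] := eqVneq x y.
  by rewrite /Fq /= -exy (ddist_diag hkx) invr0 mulr0.
exfalso; apply: hG.
have hd : 0 < `|x - y| by rewrite normr_gt0 subr_eq0.
have [M hM] := small_pow (dyadic_len j) hd.
have ncM : ~ common (lev j M) x y.
  move=> hc; have := common_close hc.
  rewrite /lev opprD expfzDr // -[2 ^ (- M%:Z)]invr_expz => h.
  by have := lt_trans h hM; rewrite lt_irreflexive.
have step : forall M, common (lev j 0) x y -> ~ common (lev j M) x y ->
    exists m, common (lev j m) x y /\ ~ common (lev j m + 1) x y.
  elim=> [|M' IH] c0 nc; first by [].
  case: (pselect (common (lev j M') x y)) => h.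
    by exists M'; split => //; rewrite -levS.
  exact: IH.
have c0 : common (lev j 0) x y by exists k; rewrite /lev addr0.
have [m [[q [hqx hqy]] hnc]] := step M c0 ncM.
have ek : (q %/ 2 ^ m)%N = k := dy_uniq (dy_upm hqx) hkx.
exists m.
case: (dy_split hqx) => hx'; case: (dy_split hqy) => hy'.
- by exfalso; apply: hnc; exists q.*2.
- apply: (G_intro ek (or_introl erefl) hx').
  by rewrite /partner odd_double.
- apply: (G_intro ek (or_intror erefl) hx').
  by rewrite /partner /= odd_double.
- by exfalso; apply: hnc; exists q.*2.+1.
Qed.

End GG.

Section Int.
Variable R : realType.
Local Notation mu2 := ((@lebesgue_measure R) \x (@lebesgue_measure R))%E.
Local Open Scope ereal_scope.
Local Notation T2 := (measurableTypeR R * measurableTypeR R)%type.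

Lemma integral_pieces (D : set T2) (G : nat -> set T2)
    (g : T2 -> \bar R) (v : nat -> \bar R) :
  measurable D -> (forall m, measurable (G m)) -> (forall m, G m `<=` D) ->
  trivIset setT G ->
  (forall m z, G m z -> g z = v m) ->
  (forall z, D z -> ~ (exists m, G m z) -> g z = 0) ->
  (forall z, D z -> 0 <= g z) ->
  \int[mu2]_(z in D) g z = \sum_(m <oo) (v m * mu2 (G m)).
Proof.
move=> mD mG GD tG hv h0 hpos.
set U := \bigcup_m G m.
have mU : measurable U by apply: bigcupT_measurable.
have UD : U `<=` D by move=> z [m _ /GD].
have DU : D = U `|` (D `\` U).
  apply/seteqP; split => z.
    by move=> hz; case: (pselect (U z)) => h; [left|right].
  by case=> [/UD|[]].
have mDU : measurable (D `\` U) by apply: measurableD.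
have mgU : measurable_fun U g.
  apply/measurable_fun_bigcup => // m.
  apply: (eq_measurable_fun (cst (v m))); last exact: measurable_cst.
  by move=> z /[1!inE] hz; rewrite (hv _ _ hz).
have mgDU : measurable_fun (D `\` U) g.
  apply: (eq_measurable_fun (cst 0)); last exact: measurable_cst.
  move=> z; rewrite inE => -[hz hnu]; rewrite h0 //.
  by move=> [m hm]; apply: hnu; exists m.
rewrite DU ge0_integral_setU //; first last.
- by apply/disj_setPS => z [hu [_ hnu]].
- by move=> z hz; apply: hpos; rewrite DU.
- by apply/measurable_funU.
rewrite [X in _ + X]integral0_eq; last first.
  move=> z [hz hnu]; apply: h0 => // -[m hm]; apply: hnu; exists m => //.
rewrite adde0 ge0_integral_bigcup //; last first.
  by move=> z hz; apply: hpos; apply: UD.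
apply: eq_eseriesr => m _.
rewrite (eq_integral (cst (v m))); last by move=> z /[1!inE] hz; rewrite (hv _ _ hz).
by rewrite integral_cst.
Qed.

Lemma eseries_geom (a z : R) : (0 <= z)%R -> (z < 1)%R ->
  \sum_(m <oo) (a * z ^+ m)%:E = (a / (1 - z))%:E.
Proof.
move=> z0 z1; apply: cvg_lim => //.
apply: cvg_EFin.
  by apply: nearW => //= x; rewrite /eseries/= sumEFin.
rewrite [X in X @ _ --> _](_ : _ = series (geometric a z)); last first.
  by apply/funext => x; rewrite /= /eseries/= sumEFin.
by apply: cvg_geometric_series; rewrite ger0_norm.
Qed.

End Int.

Section PartB.
Variable R : realType.
Variables (j : int) (k : nat) (s : R).
Hypotheses (hs0 : 0 < s) (hs1 : s < 2^-1).
Local Notation mu2 := ((@lebesgue_measure R) \x (@lebesgue_measure R))%E.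
Local Notation T2 := (measurableTypeR R * measurableTypeR R)%type.
Local Notation G := (@G R j k).
Local Notation Fq := (@Fq R j k s).
Local Notation vq := (@vq R j s).
Local Notation ell := (dyadic_len (R:=R) j).
Local Notation b := ((2:R) `^ (- (2 * s))).

Lemma ell_pos : 0 < ell.
Proof. exact: two_pos. Qed.

Lemma dlev m : dyadic_len (lev j m) = ell * (2 ^+ m)^-1 :> R.
Proof.
by rewrite /dyadic_len /lev opprD expfzDr // -[2 ^ (- m%:Z)]invr_expz.
Qed.

Lemma twoj : (2:R) ^ j = ell^-1.
Proof. by rewrite /dyadic_len -invr_expz invrK. Qed.

Lemma powd m : (ell * (2 ^+ m)^-1) `^ (2 * s) = ell `^ (2 * s) * b ^+ m.
Proof.
have hl := ell_pos.
rewrite powRM ?invr_ge0 ?exprn_ge0 ?ltW //.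
congr (_ * _).
rewrite -powR_invn // -powRrM -powR_mulrn ?powR_ge0 // -powRrM.
by congr (_ `^ _); ring.
Qed.

Lemma piece m : vq m * ((dyadic_len (lev j m.+1) * dyadic_len (lev j m.+1)) *+ 2 ^ m.+1)
  = (if m == 0%N then -1 else 1) * (ell `^ (2 * s) * b ^+ m) / 2.
Proof.
rewrite /(vq) !dlev powd twoj.
have hl := ell_pos.
have hP : (0:R) < 2 ^+ m by apply: exprn_gt0.
rewrite -[_ *+ (2 ^ m.+1)%N]mulr_natr natrX exprS.
move: hl hP; set P := (2:R) ^+ m; set L := ell => hl hP.
set B := (_ `^ _ ^+ m); set S := (if _ then _ else _); set Q := (L `^ _).
field; by rewrite (gt_eqF hl) (gt_eqF hP).
Qed.


Lemma b_ge0 : 0 <= b. Proof. exact: powR_ge0. Qed.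

Lemma b_lt1 : b < 1.
Proof.
rewrite powRN invf_lt1; last exact: powR_gt0.
have h1 : 1 <= (2:R) `^ (2 * s).
  rewrite -[X in X <= _](powRr0 2); apply: (ler_powR (a := 2)); first by rewrite ler1n.
  by rewrite mulr_ge0 // ltW.
rewrite lt_neqAle h1 andbT eq_sym powR_eq1; apply/negP.
case/or3P => [/eqP h|h|/eqP h]; [|lra|].
  lra.
have : (0:R) < 2 * s by rewrite mulr_gt0.
by rewrite h ltxx.
Qed.

Lemma vq_sign m : 0 < (if m == 0%N then -1 else 1) * vq m.
Proof.
rewrite /(vq) /= mulrCA mulrA -!mulrA.
have hd : 0 < dyadic_len (R:=R) (lev j m) by apply: two_pos.
case: (m == 0%N); rewrite ?mulN1r ?mul1r ?mulrN ?opprK ?mulNr ?opprK;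
  apply: mulr_gt0; try apply: mulr_gt0; try apply: powR_gt0; rewrite ?invr_gt0 //;
  apply: two_pos.
Qed.

Lemma vq_pos m : 0 < vq m.+1.
Proof. by have := vq_sign m.+1; rewrite /= mul1r. Qed.

Lemma vq0_neg : vq 0 < 0.
Proof. by have := vq_sign 0; rewrite /= mulN1r oppr_gt0. Qed.


Lemma Dmeas : measurable ([set z : R * R | 0 < z.1 /\ 0 < z.2] : set T2).
Proof.
have -> : ([set z : R * R | 0 < z.1 /\ 0 < z.2] : set T2) =
    `]0, +oo[%classic `*` `]0, +oo[%classic.
  apply/seteqP; split => z /=; rewrite !in_itv /= ?andbT; first by case.
  by move=> [-> ->].
by apply: measurableX; apply: measurable_itv.
Qed.

Lemma not_G0 z : ~ G 0 z -> ~ (exists m, G m.+1 z) -> ~ exists m, G m z.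
Proof. by move=> h0 h1 [[|m] hm]; [apply: h0|apply: h1; exists m]. Qed.

Lemma partb : Qdelta s (haar j k) = (gamma1 s * ell `^ (2 * s))%:E.
Proof.
rewrite /Qdelta.
set D := [set z : R * R | _].
change (\int[mu2]_(z in D) (Fq z)%:E = (gamma1 s * ell `^ (2 * s))%:E)%E.
rewrite integralE.
have Pp : (\int[mu2]_(z in D) ((fun z => (Fq z)%:E)^\+ z) =
    ((ell `^ (2 * s) / 2 * b) / (1 - b))%:E)%E.
  rewrite (@integral_pieces _ D (fun m => G m.+1) _ (fun m => (vq m.+1)%:E)).
  - transitivity (\sum_(m <oo) ((ell `^ (2 * s) / 2 * b) * b ^+ m)%:E)%E.
      apply: eq_eseriesr => m _.
      rewrite G_measure -EFinM piece /=; congr (_%:E); rewrite exprS; ring.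
    exact: eseries_geom b_ge0 b_lt1.
  - exact: Dmeas.
  - by move=> m; apply: G_meas.
  - by move=> m z /G_pos.
  - by move=> a c _ _ h; have := G_triv I I h => -[].
  - move=> m z hz; rewrite funeposE /= (G_value s hz).
    by apply/max_idPl; rewrite lee_fin ltW // vq_pos.
  - move=> z hz hn; rewrite funeposE /=.
    case: (pselect (G 0 z)) => h0.
      by rewrite (G_value s h0); apply/max_idPr; rewrite lee_fin ltW // vq0_neg.
    by rewrite (Fq_out s hz.1 hz.2 (not_G0 h0 hn)) maxxx.
  - by move=> z _; apply: funepos_ge0.
have Pm : (\int[mu2]_(z in D) ((fun z => (Fq z)%:E)^\- z) =
    (ell `^ (2 * s) / 2)%:E)%E.
  rewrite (@integral_pieces _ D (fun m => if m == 0%N then G 0 else set0) _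
     (fun m => (- vq 0)%:E)).
  - rewrite (nneseries_split 0 1); last first.
      move=> m _; apply: mule_ge0; last exact: measure_ge0.
      by rewrite lee_fin oppr_ge0 ltW // vq0_neg.
    rewrite eseries0; last first.
      by move=> [|m] //= _ _; rewrite measure0 mule0.
    rewrite adde0 add0n big_nat1 /= G_measure -EFinM mulNr.
    have := piece 0; rewrite /= => ->.
    congr (_%:E); rewrite expr0; ring.
  - exact: Dmeas.
  - by move=> [|m] /=; [apply: G_meas|apply: measurable0].
  - by move=> [|m] z /=; [move/G_pos|].
  - by move=> [|a] [|c] _ _ //= [z [? ?]].
  - move=> [|m] z //= hz; rewrite funenegE /= (G_value s hz).
    by apply/max_idPl; rewrite lee_fin oppr_ge0 ltW // vq0_neg.
  - move=> z hz hn; rewrite funenegE /=.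
    have h0 : ~ G 0 z by move=> h; apply: hn; exists 0%N.
    case: (pselect (exists m, G m.+1 z)) => [[m hm]|h1].
      rewrite (G_value s hm); apply/max_idPr.
      by rewrite lee_fin oppr_le0 ltW // vq_pos.
    by rewrite (Fq_out s hz.1 hz.2 (not_G0 h0 h1)) oppr0 maxxx.
  - by move=> z _; apply: funeneg_ge0.
rewrite Pp Pm -EFinB; congr (_%:E).
rewrite /gamma1 powRD; last by rewrite pnatr_eq0 implybT.
rewrite powRr1 //.
have hb := b_lt1.
move: hb; set B := b => hb.
field.
by apply/negP => /eqP h; move: hb; rewrite -subr_gt0 h ltxx.
Qed.

End PartB.

Section PartA.
Variable R : realType.

Lemma cont_of_derive (g : R -> R) (dg x : R) : is_derive x 1 g dg -> {for x, continuous g}.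
Proof.
move=> h; apply: differentiable_continuous; apply/derivable1_diffP.
exact: ex_derive.
Qed.

Lemma int_sq (a lo hi c : R) : (lo < hi)%R ->
  (\int[lebesgue_measure]_(x in `]lo, hi]) (c * (x - a) ^+ 2)%:E =
  (c / 3 * ((hi - a) ^+ 3 - (lo - a) ^+ 3))%:E)%E.
Proof.
move=> hlh.
pose F : R -> R := ((c / 3) \*: (shift (- a) ^+ 3))%R.
pose f : R -> R := fun x => (c * (x - a) ^+ 2)%R.
have dF : forall x : R, is_derive x (1:R) F (f x).
  move=> x; apply: is_derive_eq.
  by rewrite /f /= subr0 /GRing.scale /= mulr1; field.
pose f2 : R -> R := (c \*: (shift (- a) ^+ 2))%R.
have ef : f = f2.
  by apply/funext => x; rewrite /f /f2 /= /GRing.scale /= exprfctE.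
have cf : continuous f.
  rewrite ef => x; apply: (@cont_of_derive _ (c *: ((2%:R * shift (- a) x ^+ 1) *: (1 - 0))) x).
have cF : continuous F by move=> x; apply: (cont_of_derive (dF x)).
rewrite integral_itv_obnd_cbnd; last first.
  apply/measurable_EFinP; apply: (measurable_funS (E := setT)) => //.
  exact: continuous_measurable_fun.
rewrite (@continuous_FTC2 _ f F lo hi hlh).
- rewrite -EFinB; congr (_%:E).
  rewrite /F /= /GRing.scale /= !exprfctE /=; ring.
- by apply: continuous_in_subspaceT => x _; apply: cf.
- split.
  + by move=> x _; have [] := dF x.
  + by apply: cvg_at_right_filter; apply: cF.
  + by apply: cvg_at_left_filter; apply: cF.
- by move=> x _; rewrite derive1E derive_val.
Qed.


Lemma parta (j : int) (k : nat) :
  Var_dens (fun x : R => (haar j k x) ^+ 2) = (12^-1 * dyadic_len (R:=R) j ^+ 2)%:E.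
Proof.
set ell := dyadic_len (R:=R) j.
have hl : 0 < ell by apply: two_pos.
set lo := k%:R * (2:R) ^ (- j).
have elo : k.+1%:R * (2:R) ^ (- j) = lo + ell by rewrite /lo /ell /dyadic_len natS; ring.
have hlh : lo < lo + ell by rewrite ltrDl.
have hj : (2:R) ^ j = ell^-1 by rewrite /ell /dyadic_len -invr_expz invrK.
have hint : forall a : R, (\int[lebesgue_measure]_x ((x - a) ^+ 2 * haar j k x ^+ 2)%:E =
    (ell ^+ 2 / 12 + (lo + ell / 2 - a) ^+ 2)%:E)%E.
  move=> a.
  rewrite (_ : (fun x => ((x - a) ^+ 2 * haar j k x ^+ 2)%:E) =
     ((fun x => (2 ^ j * (x - a) ^+ 2)%:E) \_ (dyi j k))); last first.
    apply/funext => x; rewrite patchE.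
    case: (pselect (dyi j k x)) => h.
      by rewrite mem_set // haar_in // mulrC.
    by rewrite memNset // haar_out // expr0n /= mulr0.
  rewrite -integral_mkcond dyi_itv elo int_sq // hj.
  congr (_%:E); rewrite -/lo; field.
  by rewrite gt_eqF.
rewrite /Var_dens.
have -> : range (fun a : R => (\int[lebesgue_measure]_x ((x - a) ^+ 2 * haar j k x ^+ 2)%:E)%E)
   = range (fun a : R => (ell ^+ 2 / 12 + (lo + ell / 2 - a) ^+ 2)%:E).
  by rewrite (funext hint).
apply/le_anti/andP; split.
  apply: ereal_inf_lbound; exists (lo + ell / 2) => //.
  by rewrite subrr expr0n /= addr0 mulrC.
apply: le_ereal_inf_tmp => _ [a _ <-].
rewrite lee_fin mulrC lerDl; exact: sqr_ge0.
Qed.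

End PartA.

Unset Implicit Arguments.
Theorem lemma2p3 (R : realType) (s : R) (hs0 : 0 < s) (hs1 : s < 2^-1)
  (j : int) (k : nat) :
  Var_dens (fun x : R => (haar j k x) ^+ 2) = (12^-1 * dyadic_len (R:=R) j ^+ 2)%:E /\
  Qdelta s (haar j k) = (gamma1 s * dyadic_len (R:=R) j `^ (2 * s))%:E.
Proof.
split; first exact: parta.
exact: partb.
Qed.
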